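(* Let $q$ be a prime power and let $M=(m_{ij})$ be a $2\times 2$ matrix with all $m_{ij}\in\mathbb{F}_q$. Let $N=(n_{ij})$ be the $2\times 2$ matrix with $n_{11}=m_{11}$, $n_{22}=m_{22}$, $n_{21}=0$, $n_{12}=m_{12}+m_{21}$. Then $\mathrm{Num}'_0(M)_q=\mathrm{Num}'_0(N)_q$ and $\mathrm{Num}_k(M)_q=\mathrm{Num}_k(N)_q$ for all $k\in\mathbb{F}_q$. Moreover: (i) If $q\equiv -1\pmod 4$, then $\mathrm{Num}'_0(M)_q=\emptyset$. (ii) Assume $q$ is even. If $m_{22}+m_{12}+m_{21}+m_{11}\neq 0$, then $\mathrm{Num}'_0(M)_q=\mathbb{F}_q^*$ and $\sharp(\mathrm{Num}_k(M)_q)\ge q/2$ for all $k\in\mathbb{F}_q^*$. If $m_{22}+m_{12}+m_{21}+m_{11}=0$, then $\mathrm{Num}'_0(M)_q=\{0\}$ and for each fixed $k\in\mathbb{F}_q^*$ either $\mathrm{Num}_k(M)_q=\mathbb{F}_q$ or $\sharp(\mathrm{Num}_k(M)_q)=1$. If $m_{12}+m_{21}=0$ and $m_{11}\neq m_{22}$, then $\mathrm{Num}_k(M)_q=\mathbb{F}_q$ for all $k\in\mathbb{F}_q^*$. (iii) Assume $q\equiv 1\pmod 4$. (iii1) If $m_{12}+m_{21}\neq 0$, then $\mathrm{Num}_0(M)_q$ contains at least $(q-1)/2$ elements of $\mathbb{F}_q^*$. (iii2) Assume $m_{12}+m_{21}=0$. If $m_{11}=m_{22}$, then $\mathrm{Num}_k(M)_q=\{km_{11}\}$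 for all $k\in\mathbb{F}_q$ and $0\in\mathrm{Num}'_0(M)_q$. If $m_{11}\neq m_{22}$, then $\sharp(\mathrm{Num}_k(M)_q)\le (q+1)/2$ for all $k\in\mathbb{F}_q$, $\sharp(\mathrm{Num}_0(M)_q)=(q+1)/2$ and $\sharp(\mathrm{Num}'_0(M)_q)=(q-1)/2$.
   Context: The Hermitian form on $\mathbb{F}_{q^2}^n$ is $\langle u,v\rangle=\sum_i u_i^q v_i$; for $u=(x_1,\dots,x_n)\in\mathbb{F}_q^n$ and $M=(m_{ij})$ with entries in $\mathbb{F}_q$ one has $\langle u,u\rangle=\sum_i x_i^2$ and $\langle u,Mu\rangle=\sum_{i,j}m_{ij}x_ix_j$. For such $M$ and $k\in\mathbb{F}_q$, $\mathrm{Num}_k(M)_q=\{\langle u,Mu\rangle: u\in\mathbb{F}_q^n,\ \langle u,u\rangle=k\}$, and (for $n\ge 2$) $\mathrm{Num}'_0(M)_q=\{\langle u,Mu\rangle: u\in\mathbb{F}_q^n\setminus\{0\},\ \langle u,u\rangle=0\}$. *)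

(* Defs.v *)
From HB Require Import structures.
From mathcomp Require Import all_boot all_order all_algebra all_field.
Set Implicit Arguments. Unset Strict Implicit. Unset Printing Implicit Defensive.
Import Order.TTheory GRing.Theory.
Local Open Scope ring_scope.

Definition herm_self (F : finFieldType) (n : nat) (u : 'rV[F]_n) : F :=
  \sum_(i < n) u 0 i ^+ 2.

Definition herm_M (F : finFieldType) (n : nat) (M : 'M[F]_n) (u : 'rV[F]_n) : F :=
  \sum_(i < n) \sum_(j < n) M i j * u 0 i * u 0 j.

Definition Numk (F : finFieldType) (n : nat) (k : F) (M : 'M[F]_n) : {set F} :=
  [set herm_M M u | u in [set u : 'rV[F]_n | herm_self u == k]].

Definition Num0' (F : finFieldType) (n : nat) (M : 'M[F]_n) : {set F} :=
  [set herm_M M u | u in [set u : 'rV[F]_n | (u != 0) && (herm_self u == 0)]].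

Definition Nmat (F : finFieldType) (n : nat) (M : 'M[F]_n) : 'M[F]_n :=
  \matrix_(i < n, j < n)
    (if i == j then M i j else if (i < j)%N then M i j + M j i else 0).

(* Main.v *)
Require Import Defs.
From HB Require Import structures.
From mathcomp Require Import all_boot all_order all_algebra all_field.
From mathcomp Require Import zify ring.
Set Implicit Arguments. Unset Strict Implicit. Unset Printing Implicit Defensive.
Import Order.TTheory GRing.Theory.
Local Open Scope ring_scope.

Lemma two_eq0_even (F : finFieldType) : (2%:R == 0 :> F) = ~~ odd #|F|.
Proof.
apply/idP/idP.
- move=> h2.
  have c2 : (2%N \in [pchar F]) by rewrite inE /= h2.
  have hq : #|F| = (2 ^ logn 2 #|F|)%N := card_pprimeChar c2.
  have := finNzRing_gt1 F.
  rewrite hq oddX /= orbF.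
  by case: (logn 2 _).
- move=> ev.
  have [p pp cp] := finPcharP F.
  have hq : #|F| = (p ^ logn p #|F|)%N := card_pprimeChar cp.
  move: ev; rewrite hq oddX negb_or => /andP[_ ev].
  case: (even_prime pp) => hp; last by rewrite hp in ev.
  by rewrite -hp; apply/eqP; exact: pcharf0 cp.
Qed.

Import Order.TTheory GRing.Theory.
Local Open Scope ring_scope.

Section Fin.
Variable F : finFieldType.

Lemma card_gt1 : (1 < #|F|)%N. Proof. exact: finNzRing_gt1. Qed.

Lemma fermat (x : F) : x != 0 -> x ^+ #|F|.-1 = 1.
Proof.
move=> xnz; have := expf_card x.
rewrite -(prednK (ltnW card_gt1)) exprS => h.
by apply: (mulfI xnz); rewrite h mulr1.
Qed.

Lemma sqrt_neg1 : (#|F| %% 4 = 1)%N -> exists i : F, i ^+ 2 = -1.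
Proof.
move=> h4.
have q1 := card_gt1.
set m := (#|F|.-1 %/ 2)%N.
have [x /andP[xnz xm]] : exists x : F, (x != 0) && (x ^+ m != 1).
  case: (pickP [pred x : F | (x != 0) && (x ^+ m != 1)]) => [x hx | H]; first by exists x.
  pose p : {poly F} := 'X^m - 1.
  have m0 : (0 < m)%N by rewrite /m; lia.
  have pnz : p != 0 by rewrite -size_poly_eq0 /p size_Xn_sub_1.
  have := @max_poly_roots _ p (enum [pred x : F | x != 0]) pnz.
  rewrite enum_uniq size_Xn_sub_1 // -cardE cardC1.
  have -> : all (root p) (enum [pred x : F | x != 0]).
    apply/allP => x; rewrite mem_enum inE => xnz.
    have := H x; rewrite /= xnz /= => /negbFE /eqP hx.
    by rewrite rootE /p hornerD hornerN hornerXn hornerC hx subrr.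
  move=> /(_ isT isT) h; exfalso; move: h; rewrite /m; move: h4 q1; clear. set Q := #|F|. clearbody Q; lia.
have hz : (x ^+ m) ^+ 2 = 1.
  rewrite -exprM.
  have -> : (m * 2 = #|F|.-1)%N by rewrite /m; lia.
  exact: fermat.
move/eqP: hz; rewrite sqrf_eq1 (negbTE xm) /= => /eqP hz.
exists (x ^+ (m %/ 2)); rewrite -exprM.
have -> : (m %/ 2 * 2 = m)%N by rewrite /m; lia.
exact: hz.
Qed.

Lemma sqrt_neg1_false (i : F) : (#|F| %% 4 = 3)%N -> i ^+ 2 = -1 -> False.
Proof.
move=> h4 hi.
have inz : i != 0 by apply: contra_eq_neq hi => ->; rewrite expr0n /= eq_sym oppr_eq0 oner_eq0.
have := fermat inz.
have -> : (#|F|.-1 = 2 * ((#|F|.-1 %/ 4) * 2 + 1))%N by lia.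
rewrite exprM hi exprD expr1 mulnC exprM sqrrN !expr1n mul1r => h.
have h2 : (2%:R : F) == 0 by rewrite mulr2n -{1}h addNr.
rewrite two_eq0_even in h2.
have ho : (#|F| %% 2 = 1)%N by move: h4; clear; lia.
by rewrite modn2 in ho; rewrite (negPf h2) in ho.
Qed.
End Fin.

Section Sq.
Variable F : finFieldType.

Definition sqs := [set x ^+ 2 | x in [set x : F | x != 0]].
Definition sqa := [set x ^+ 2 | x in [set: F]].

Lemma fiber_le2 (f s : F -> F) (A : {set F}) :
  (forall x y, x \in A -> y \in A -> f x = f y -> y = x \/ y = s x) ->
  (#|A| <= 2 * #|f @: A|)%N.
Proof.
move=> H.
rewrite -sum1_card (partition_big_imset f) /= mulnC -sum_nat_const.
apply: leq_sum => j /imsetP[x xA ->].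
rewrite sum1dep_card.
apply: leq_trans (_ : #|[set x; s x]| <= 2)%N; last by rewrite cards2 ltnS leq_b1.
apply: subset_leq_card; apply/subsetP => y; rewrite !inE => /andP[yA /eqP e].
by case: (H x y xA yA (esym e)) => ->; rewrite eqxx ?orbT.
Qed.

Lemma card_sqs : (2%:R != 0 :> F) -> (#|sqs| * 2 = #|F|.-1)%N.
Proof.
move=> h2; rewrite /sqs.
set A := [set x : F | x != 0].
have -> : #|F|.-1 = #|A| by rewrite -(cardsC1 (0 : F)); apply: eq_card => x; rewrite !inE.
rewrite -[in RHS]sum1_card (partition_big_imset (fun x : F => x ^+ 2)) /= -sum_nat_const.
apply: eq_bigr => j /imsetP[x xA ->].
rewrite sum1dep_card.
move: xA; rewrite inE => xnz.
have -> : [set x0 | (x0 \in A) && (x0 ^+ 2 == x ^+ 2)] = [set x; -x].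
  apply/setP => y; rewrite !inE eqf_sqr andb_idl //.
  by move=> /orP[/eqP->|/eqP->]; rewrite ?oppr_eq0.
rewrite cards2.
suff -> : (x != - x) by [].
by rewrite -addr_eq0 -mulr2n -mulr_natl mulf_eq0 negb_or h2.
Qed.

Lemma card_sqa : #|sqa| = (#|sqs| + 1)%N.
Proof.
have -> : sqa = 0 |: sqs.
  apply/setP => y; rewrite !inE; apply/imsetP/idP.
    move=> [x _ ->]; have [->|xnz] := eqVneq x 0; first by rewrite expr0n eqxx.
    by apply/orP; right; apply/imsetP; exists x; rewrite ?inE.
  case/orP => [/eqP->|/imsetP[x _ ->]]; first by exists 0; rewrite ?inE ?expr0n.
  by exists x; rewrite ?inE.
rewrite cardsU1 addnC; congr (_ + _)%N.
suff -> : (0 : F) \notin sqs by [].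
apply/imsetP => -[x]; rewrite inE => xnz /eqP; rewrite eq_sym expf_eq0 /=.
by rewrite (negPf xnz).
Qed.

Lemma sum2sq : (2%:R != 0 :> F) -> forall k : F, exists x y : F, x ^+ 2 + y ^+ 2 = k.
Proof.
move=> h2 k.
set B := [set k - y | y in sqa].
have cB : #|B| = #|sqa|.
  apply: card_imset => a b h; apply: oppr_inj; exact: (addrI k).
have h3 : (#|sqa :|: B| <= #|F|)%N by apply: max_card.
have q1 : (1 < #|F|)%N by exact: finNzRing_gt1.
have h1 : (#|sqa :|: B| + #|sqa :&: B| = #|F|.+1)%N.
  rewrite cardsUI cB card_sqa.
  have := card_sqs h2; move: q1; clear; lia.
have : (0 < #|sqa :&: B|)%N.
  move: h1 h3; clear; lia.
rewrite card_gt0 => /set0Pn[z]; rewrite inE => /andP[/imsetP[x _ ->] /imsetP[y ysq e]].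
move: ysq => /imsetP[w _ ew].
by exists x, w; rewrite e ew subrK.
Qed.
End Sq.


Section Vec.
Variable F : finFieldType.
Implicit Types M : 'M[F]_2.

Definition mk (x y : F) : 'rV[F]_2 := \row_(j < 2) if j == ord0 then x else y.
Definition Q M (x y : F) : F :=
  M ord0 ord0 * x ^+ 2 + (M ord0 ord_max + M ord_max ord0) * x * y + M ord_max ord_max * y ^+ 2.

Lemma lift00 : lift ord0 ord0 = ord_max :> 'I_2.
Proof. exact: val_inj. Qed.

Lemma herm_self_E (u : 'rV[F]_2) : herm_self u = u 0 ord0 ^+ 2 + u 0 ord_max ^+ 2.
Proof. by rewrite /herm_self !big_ord_recl big_ord0 addr0 lift00. Qed.

Lemma herm_M_E M (u : 'rV[F]_2) : herm_M M u = Q M (u 0 ord0) (u 0 ord_max).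
Proof.
rewrite /herm_M !big_ord_recl !big_ord0 !addr0 lift00 /Q.
ring.
Qed.

Lemma Q_N M x y : Q (Nmat M) x y = Q M x y.
Proof. rewrite /Q /Nmat !mxE /=. ring. Qed.

Lemma herm_M_N M u : herm_M (Nmat M) u = herm_M M u.
Proof. by rewrite !herm_M_E Q_N. Qed.

Lemma mk0 x y : mk x y 0 ord0 = x. Proof. by rewrite mxE. Qed.
Lemma mk1 x y : mk x y 0 ord_max = y. Proof. by rewrite mxE. Qed.

Lemma rV2_eq0 (u : 'rV[F]_2) : (u == 0) = (u 0 ord0 == 0) && (u 0 ord_max == 0).
Proof.
apply/eqP/andP => [->|[/eqP h0 /eqP h1]]; first by rewrite !mxE.
apply/rowP => j; rewrite mxE.
case: j => [[|[|//]]] /= hj.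
  by rewrite -h0; congr (u 0 _); apply: val_inj.
by rewrite -h1; congr (u 0 _); apply: val_inj.
Qed.

Lemma memNumk k M z :
  reflect (exists x y, x ^+ 2 + y ^+ 2 = k /\ z = Q M x y) (z \in Numk k M).
Proof.
apply: (iffP imsetP) => [[u] | [x [y [hk ->]]]].
  rewrite inE => /eqP hu ->.
  by exists (u 0 ord0), (u 0 ord_max); rewrite -herm_self_E herm_M_E.
by exists (mk x y); rewrite ?inE ?herm_self_E ?herm_M_E !mk0 !mk1 ?hk.
Qed.

Lemma memNum0' M z :
  reflect (exists x y, [/\ (x != 0) || (y != 0), x ^+ 2 + y ^+ 2 = 0 & z = Q M x y])
          (z \in Num0' M).
Proof.
apply: (iffP imsetP) => [[u] | [x [y [hnz hk ->]]]].
  rewrite inE rV2_eq0 negb_and => /andP[hnz /eqP hu] ->.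
  by exists (u 0 ord0), (u 0 ord_max); rewrite -herm_self_E herm_M_E.
by exists (mk x y); rewrite ?inE ?rV2_eq0 ?herm_self_E ?herm_M_E !mk0 !mk1 ?hk ?negb_and ?eqxx ?andbT.
Qed.
End Vec.

Section Main.
Variable F : finFieldType.
Variable M : 'M[F]_2.
Local Notation m11 := (M ord0 ord0).
Local Notation m12 := (M ord0 ord_max).
Local Notation m21 := (M ord_max ord0).
Local Notation m22 := (M ord_max ord_max).
Local Notation c := (m12 + m21).
Local Notation q := #|F|.

Lemma partN0 : Num0' M = Num0' (Nmat M).
Proof. by apply: eq_imset => u; rewrite herm_M_N. Qed.

Lemma partNk k : Numk k M = Numk k (Nmat M).
Proof. by apply: eq_imset => u; rewrite herm_M_N. Qed.

Lemma part_i : (q %% 4 = 3)%N -> Num0' M = set0.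
Proof.
move=> h4; apply/setP => z; rewrite inE; apply/memNum0' => -[x [y [hnz hk _]]].
have ey : y ^+ 2 = - x ^+ 2 by apply/eqP; rewrite -addr_eq0 addrC hk.
have [x0|xnz] := eqVneq x 0.
  move: ey hnz; rewrite x0 expr0n /= oppr0 => /eqP; rewrite expf_eq0 /= => ->.
  by rewrite eqxx.
apply: (@sqrt_neg1_false F (y / x) h4).
by rewrite expr_div_n ey mulNr divff // expf_neq0.
Qed.

End Main.

Section Char2.
Variable F : finFieldType.
Hypothesis h2 : (2%:R : F) == 0.

Lemma neg2 (x : F) : - x = x.
Proof.
apply/eqP; rewrite eq_sym -addr_eq0 -mulr2n -mulr_natl (eqP h2) mul0r //.
Qed.

Lemma sq_inj2 : injective (fun x : F => x ^+ 2).
Proof.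
move=> x y /eqP; rewrite eqf_sqr neg2 orbb => /eqP //.
Qed.

Lemma sqrt2 (k : F) : exists t, t ^+ 2 = k.
Proof.
have [g fg gf] := injF_bij sq_inj2.
by exists (g k); rewrite gf.
Qed.

Lemma char2_sum (k t x y : F) : t ^+ 2 = k -> (x ^+ 2 + y ^+ 2 = k <-> y = t + x).
Proof.
move=> ht; split => [h | ->].
  have e : (x + y) ^+ 2 = t ^+ 2.
    rewrite ht -h sqrrD -mulr_natr (eqP h2) mulr0 addr0 //.
  move/sq_inj2: e => <-.
  have xx : x + x = 0 by rewrite -{1}(neg2 x) addNr.
  by rewrite addrAC xx add0r.
rewrite -ht.
have -> : x ^+ 2 + (t + x) ^+ 2 = t ^+ 2 + 2%:R * (x ^+ 2 + t * x) by ring.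
by rewrite (eqP h2) mul0r addr0.
Qed.

End Char2.

Lemma imsetT_inj (F : finType) (f : F -> F) : injective f -> f @: [set: F] = [set: F].
Proof.
move=> fi; apply/eqP; rewrite eqEcard subsetT /= card_imset //.
Qed.

Section MainC2.
Variable F : finFieldType.
Variable M : 'M[F]_2.
Hypothesis h2 : (2%:R : F) == 0.
Local Notation m11 := (M ord0 ord0).
Local Notation m12 := (M ord0 ord_max).
Local Notation m21 := (M ord_max ord0).
Local Notation m22 := (M ord_max ord_max).
Local Notation c := (m12 + m21).
Local Notation s := (m22 + m12 + m21 + m11).
Local Notation q := #|F|.

Lemma Q_c2 x t : Q M x (t + x) = s * x ^+ 2 + c * t * x + m22 * t ^+ 2.
Proof.
have -> : Q M x (t + x) = s * x ^+ 2 + c * t * x + m22 * t ^+ 2 + 2%:R * (m22 * t * x).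
  by rewrite /Q; ring.
by rewrite (eqP h2) mul0r addr0.
Qed.

Lemma Numk_c2 k t : t ^+ 2 = k ->
  Numk k M = [set s * x ^+ 2 + c * t * x + m22 * t ^+ 2 | x in [set: F]].
Proof.
move=> ht; apply/setP => z; apply/memNumk/imsetP.
  move=> [x [y [hk ->]]]; have -> := (char2_sum h2 x y ht).1 hk.
  by exists x; rewrite ?inE ?Q_c2.
move=> [x _ ->]; exists x, (t + x); split; last by rewrite Q_c2.
exact: (char2_sum h2 x (t + x) ht).2.
Qed.

Lemma Num0'_c2 : Num0' M = [set s * x ^+ 2 | x in [set x : F | x != 0]].
Proof.
have h0 : (0 : F) ^+ 2 = 0 by rewrite expr0n.
apply/setP => z; apply/memNum0'/imsetP.
  move=> [x [y [hnz hk ->]]]; have := (char2_sum h2 x y h0).1 hk; rewrite add0r => ey; subst y.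
  rewrite orbb in hnz; exists x; rewrite ?inE //.
  by rewrite /Q; ring.
move=> [x]; rewrite inE => xnz ->; exists x, x; split.
- by rewrite xnz.
- by apply: (char2_sum h2 x x h0).2; rewrite add0r.
- by rewrite /Q; ring.
Qed.

Lemma part_ii1 : s != 0 ->
  Num0' M = [set x : F | x != 0] /\ (forall k : F, k != 0 -> (q %/ 2 <= #|Numk k M|)%N).
Proof.
move=> sne; split.
  apply/setP => z; rewrite Num0'_c2 inE; apply/imsetP/idP.
    by move=> [x]; rewrite inE => xnz ->; rewrite mulf_neq0 // expf_neq0.
  move=> znz; have [t ht] := sqrt2 h2 (z / s).
  exists t; last by rewrite ht mulrC divfK.
  rewrite inE; apply: contraNneq znz => t0.
  by move: ht; rewrite t0 expr0n /= => /esym/eqP; rewrite mulf_eq0 invr_eq0 (negPf sne) orbF.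
move=> k _; have [t ht] := sqrt2 h2 k.
rewrite (Numk_c2 ht).
set f := (fun x => _).
have H : forall x y, x \in [set: F] -> y \in [set: F] -> f x = f y -> y = x \/ y = - x - c * t / s.
  move=> x y _ _ e.
  have : f x - f y = (x - y) * (s * (x + y) + c * t) by rewrite /f; ring.
  rewrite e subrr => /esym/eqP; rewrite mulf_eq0 => /orP[|] /eqP h.
    by left; apply/eqP; rewrite eq_sym -subr_eq0 h.
  right; apply: (mulfI sne).
  have -> : s * (- x - c * t / s) = - (s * x) - c * t by field.
  apply/eqP; rewrite -subr_eq0.
  have -> : s * y - (- (s * x) - c * t) = s * (x + y) + c * t by ring.
  by rewrite h.
have := fiber_le2 H; rewrite cardsT.
move=> hle; apply: leq_trans (leq_div2r 2 hle) _; by rewrite mulKn.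
Qed.


Lemma part_ii2 : s = 0 ->
  Num0' M = [set 0 : F] /\
  (forall k : F, k != 0 -> Numk k M = [set: F] \/ #|Numk k M| = 1%N).
Proof.
move=> hs; split.
  rewrite Num0'_c2 hs; apply/setP => z; rewrite inE; apply/imsetP/eqP.
    by move=> [x _ ->]; rewrite mul0r.
  by move=> ->; exists 1; rewrite ?inE ?oner_eq0 ?mul0r.
move=> k knz; have [t ht] := sqrt2 h2 k.
have tnz : t != 0 by apply: contraNneq knz => t0; rewrite -ht t0 expr0n.
rewrite (Numk_c2 ht) hs.
have [hc|hc] := eqVneq c 0.
  right; rewrite hc.
  have -> : [set 0 * x ^+ 2 + 0 * t * x + m22 * t ^+ 2 | x in [set: F]] = [set m22 * t ^+ 2].
    apply/setP => z; rewrite inE; apply/imsetP/eqP => [[x _ ->]|->].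
      by rewrite !mul0r !add0r.
    by exists 0; rewrite ?inE // !mul0r !add0r.
  by rewrite cards1.
left; apply: imsetT_inj => x y.
rewrite !mul0r !add0r => /addIr /mulfI; apply.
by rewrite mulf_neq0.
Qed.

Lemma part_ii3 : c = 0 -> m11 != m22 ->
  forall k : F, k != 0 -> Numk k M = [set: F].
Proof.
move=> hc hne k _; have [t ht] := sqrt2 h2 k.
rewrite (Numk_c2 ht) hc.
have hs : s = m22 + m11 by rewrite -(addrA m22 m12 m21) hc addr0.
have sne : s != 0.
  rewrite hs; apply: contra hne => /eqP h.
  by apply/eqP; rewrite -(neg2 h2 m22); apply/eqP; rewrite -addr_eq0 addrC h.
apply: imsetT_inj => x y.
rewrite !mul0r !addr0 => /addIr /(mulfI sne); exact: (sq_inj2 h2).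
Qed.

End MainC2.

Section MainOdd.
Variable F : finFieldType.
Variable M : 'M[F]_2.
Variable i : F.
Hypothesis hi : i ^+ 2 = -1.
Hypothesis h2 : (2%:R : F) != 0.
Local Notation m11 := (M ord0 ord0).
Local Notation m12 := (M ord0 ord_max).
Local Notation m21 := (M ord_max ord0).
Local Notation m22 := (M ord_max ord_max).
Local Notation c := (m12 + m21).
Local Notation q := #|F|.

Lemma Q_w x w : Q M x (w * x) = (m11 + c * w + m22 * w ^+ 2) * x ^+ 2.
Proof. by rewrite /Q; ring. Qed.

Lemma iso_w (x w : F) : w ^+ 2 = -1 -> x ^+ 2 + (w * x) ^+ 2 = 0.
Proof. by move=> hw; rewrite exprMn hw mulN1r addrN. Qed.

Lemma inz : i != 0.
Proof. by apply/eqP => i0; move: hi; rewrite i0 expr0n /= => /eqP; rewrite eq_sym oppr_eq0 oner_eq0. Qed.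

Lemma nq_sqs : #|sqs F| = (q.-1 %/ 2)%N.
Proof. by have := card_sqs h2; clear; lia. Qed.

Lemma nq_sqa : #|sqa F| = (q.+1 %/ 2)%N.
Proof. rewrite card_sqa; have := card_sqs h2; have := @card_gt1 F; clear; lia. Qed.

Lemma part_iii1 : c != 0 -> leq (q.-1 %/ 2)%N #|Numk 0 M :\ 0|.
Proof.
move=> hc.
have [w [hw aw]] : exists w, w ^+ 2 = -1 /\ m11 + c * w + m22 * w ^+ 2 != 0.
  have [h1|h1] := eqVneq (m11 + c * i + m22 * i ^+ 2) 0; last by exists i.
  exists (-i); split; first by rewrite sqrrN hi.
  apply/eqP => h.
  have e : 2%:R * c * i = (m11 + c * i + m22 * i ^+ 2) - (m11 + c * (- i) + m22 * (- i) ^+ 2) by ring.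
  move: e; rewrite h1 h subrr => /eqP; rewrite !mulf_eq0 (negPf h2) (negPf hc) (negPf inz).
  by [].
set a := m11 + c * w + m22 * w ^+ 2 in aw.
have sub : (fun s => a * s) @: sqs F \subset Numk 0 M :\ 0.
  apply/subsetP => z /imsetP[s /imsetP[x xnz ->] ->].
  rewrite inE in xnz; rewrite !inE mulf_neq0 ?expf_neq0 //=.
  apply/memNumk; exists x, (w * x); split; first exact: iso_w.
  by rewrite Q_w.
apply: leq_trans (subset_leq_card sub).
rewrite card_imset; last exact: mulfI aw.
by rewrite nq_sqs.
Qed.

Lemma part_iii2a : c = 0 -> m11 = m22 ->
  (forall k : F, Numk k M = [set k * m11]) /\ 0 \in Num0' M.
Proof.
move=> hc he.
have QE : forall x y, Q M x y = m11 * (x ^+ 2 + y ^+ 2).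
  by move=> x y; rewrite /Q hc -he; ring.
split.
  move=> k; apply/setP => z; rewrite inE; apply/memNumk/eqP.
    by move=> [x [y [hk ->]]]; rewrite QE hk mulrC.
  move=> ->; have [x [y hk]] := sum2sq h2 k.
  by exists x, y; split => //; rewrite QE hk mulrC.
apply/memNum0'; exists 1, i; split.
- by rewrite oner_eq0.
- by rewrite expr1n hi addrN.
- by rewrite QE expr1n hi addrN mulr0.
Qed.

Lemma part_iii2b : c = 0 -> m11 != m22 ->
  [/\ (forall k : F, #|Numk k M| <= q.+1 %/ 2)%N,
      #|Numk 0 M| = (q.+1 %/ 2)%N
    & #|Num0' M| = (q.-1 %/ 2)%N].
Proof.
move=> hc hne.
set d := m11 - m22.
have dne : d != 0 by rewrite subr_eq0.
have QE : forall x y, Q M x y = m22 * (x ^+ 2 + y ^+ 2) + d * x ^+ 2.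
  by move=> x y; rewrite /Q hc /d; ring.
have ginj : forall k, injective (fun s => m22 * k + d * s).
  by move=> k s s' /addrI /(mulfI dne).
split.
- move=> k; rewrite -nq_sqa.
  apply: leq_trans (leq_imset_card (fun s => m22 * k + d * s) (sqa F)).
  apply: subset_leq_card; apply/subsetP => z /memNumk [x [y [hk ->]]].
  rewrite QE hk; apply/imsetP; exists (x ^+ 2) => //.
  by apply: imset_f; rewrite inE.
- have -> : Numk 0 M = [set m22 * 0 + d * s | s in sqa F].
    2: by rewrite (card_imset (sqa F) (ginj 0)) nq_sqa.
  apply/setP => z; apply/memNumk/imsetP.
    move=> [x [y [hk ->]]]; rewrite QE hk; exists (x ^+ 2) => //.
    by apply: imset_f; rewrite inE.
  move=> [s /imsetP[x _ ->] ->]; exists x, (i * x); split; first exact: iso_w.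
  by rewrite QE iso_w.
- have -> : Num0' M = [set m22 * 0 + d * s | s in sqs F].
    2: by rewrite (card_imset (sqs F) (ginj 0)) nq_sqs.
  apply/setP => z; apply/memNum0'/imsetP.
    move=> [x [y [hnz hk ->]]]; rewrite QE hk; exists (x ^+ 2) => //.
    apply: imset_f; rewrite inE.
    apply: contraTneq hnz => x0; move: hk; rewrite x0 expr0n add0r => /eqP.
    by rewrite expf_eq0 /= => ->; rewrite eqxx.
  move=> [s /imsetP[x]]; rewrite inE => xnz -> ->.
  exists x, (i * x); split; first by rewrite xnz.
    exact: iso_w.
  by rewrite QE iso_w.
Qed.

End MainOdd.

Unset Implicit Arguments.

Theorem proposition5 (F : finFieldType) (M : 'M[F]_2) :
  let q := #|F| in
  let m11 := M ord0 ord0 in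
  let m12 := M ord0 ord_max in
  let m21 := M ord_max ord0 in
  let m22 := M ord_max ord_max in
  let N := Nmat M in
  [/\ Num0' M = Num0' N,
      (forall k : F, Numk k M = Numk k N),
      (modn q 4 = 3%N -> Num0' M = set0),
      (~~ odd q ->
        [/\ (m22 + m12 + m21 + m11 != 0 ->
               Num0' M = [set x : F | x != 0] /\
               (forall k : F, k != 0 -> leq (divn q 2) #|Numk k M|)),
            (m22 + m12 + m21 + m11 = 0 ->
               Num0' M = [set 0 : F] /\
               (forall k : F, k != 0 -> Numk k M = [set: F] \/ #|Numk k M| = 1%N))
          & (m12 + m21 = 0 -> m11 != m22 ->
               forall k : F, k != 0 -> Numk k M = [set: F])])
    & (modn q 4 = 1%N ->
        [/\ (m12 + m21 != 0 -> leq (divn q.-1 2) #|Numk 0 M :\ 0|),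
            (m12 + m21 = 0 -> m11 = m22 ->
               (forall k : F, Numk k M = [set k * m11]) /\ 0 \in Num0' M)
          & (m12 + m21 = 0 -> m11 != m22 ->
               [/\ (forall k : F, leq #|Numk k M| (divn q.+1 2)),
                   #|Numk 0 M| = (divn q.+1 2)%N
                 & #|Num0' M| = (divn q.-1 2)%N])])].
Proof.
move=> q m11 m12 m21 m22 N; rewrite /q /m11 /m12 /m21 /m22 /N.
split.
- exact: partN0.
- exact: partNk.
- exact: part_i.
- move=> hev.
  have h2 : (2%:R : F) == 0 by rewrite two_eq0_even.
  split.
  + exact: part_ii1.
  + exact: part_ii2.
  + exact: part_ii3.
- move=> h4.
  have h2 : (2%:R : F) != 0.
    rewrite two_eq0_even negbK.
    have ho : (#|F| %% 2 = 1)%N by move: h4; clear; lia.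
    by rewrite modn2 in ho; move: ho; case: (odd _).
  have [i hi] := sqrt_neg1 h4.
  split.
  + exact: part_iii1 hi h2.
  + exact: part_iii2a hi h2.
  + exact: part_iii2b hi h2.
Qed.
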